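(* Suppose Assumption 5 holds. Fix $\sigma,\tilde\sigma\in\Delta X$ and for $\beta\in[0,1]$ let $\sigma_\beta=\beta\sigma+(1-\beta)\tilde\sigma$. Then: (i) if $\theta(\sigma)=\theta(\tilde\sigma)$, then $\theta(\sigma_\beta)=\theta(\sigma)$ for all $\beta\in[0,1]$; (ii) if $\theta(\tilde\sigma)<\theta(\sigma)$, then $\beta\mapsto\theta(\sigma_\beta)$ is weakly increasing on $[0,1]$; (iii) if $\theta(\tilde\sigma)<\theta(\sigma)$, then $\theta(\sigma_{\beta_1})<\theta(\sigma_{\beta_2})$ for all $\beta_1<\beta_2$ in $[0,1]$ with $\theta(\sigma_{\beta_1})\in(0,1)$.
   Context: Setting. $X$ is a finite set of actions, $Y$ a set of consequences, $Q:X\to\Delta Y$ the true consequence function, and $\{Q_\theta:\theta\in\Theta\}$ the agent's models with $\Theta=[0,1]$. Assumptions 1–2 hold: $Y$ is a compact subset of a Euclidean space; there is a Borel probability measure $\nu$ on $Y$ with $Q(\cdot\mid x),Q_\theta(\cdot\mid x)\ll\nu$, densities $q(\cdot\mid x)$, $q_\theta(\cdot\mid x)$; $\theta\mapsto q_\theta(\cdot\mid x)$ is continuous $Q(\cdot\mid x)$-a.s.; and for each $x$ there is $g_x\in L^2(Y,Q(\cdot\mid x))$ with $|\ln(q(y\mid x)/q_\theta(y\mid x))|\le g_x(y)$ for all $\theta$, $Q(\cdot\mid x)$-a.s. KLD: for $\sigma\in\Delta X$ (distributions on $X$), $K(\theta,\sigma)=\sum_x\sigma(x)\int\ln\frac{q(y\mid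 x)}{q_\theta(y\mid x)}q(y\mid x)\nu(dy)$. Assumption 5 (identifiability): (i) for each $\sigma\in\Delta X$, $\theta\mapsto K(\theta,\sigma)$ has a unique minimizer on $[0,1]$, denoted $\theta(\sigma)$; (ii) for each $\sigma$ with $\theta(\sigma)\in(0,1)$, $K(\cdot,\sigma)$ is twice differentiable at $\theta(\sigma)$ and $\frac{\partial^2K(\theta,\sigma)}{\partial\theta^2}\big|_{\theta=\theta(\sigma)}>0$. *)

(* Defs.v *)
From Stdlib Require Import Reals.
Open Scope R_scope.

(* Actions X = {0,...,n-1}; a distribution sigma on X is a function nat -> R
   (only its values on 0..n-1 matter). *)
Fixpoint sumR (n : nat) (f : nat -> R) : R :=
  match n with
  | O => 0
  | S m => sumR m f + f m
  end.

Definition DeltaX (n : nat) (sigma : nat -> R) : Prop :=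
  (forall x, (x < n)%nat -> 0 <= sigma x) /\ sumR n sigma = 1.

(* k x theta := int ln(q(y|x)/q_theta(y|x)) q(y|x) nu(dy), the per-action KLD.
   K(theta, sigma) = sum_x sigma(x) k x theta. *)
Definition KLD (n : nat) (k : nat -> R -> R) (theta : R) (sigma : nat -> R) : R :=
  sumR n (fun x => sigma x * k x theta).

Definition cont_on_01 (f : R -> R) : Prop :=
  forall t, 0 <= t <= 1 -> forall eps, 0 < eps ->
    exists delta, 0 < delta /\
      forall s, 0 <= s <= 1 -> Rabs (s - t) < delta -> Rabs (f s - f t) < eps.

Definition twice_diff_at (f : R -> R) (t0 c : R) : Prop :=
  exists (d : R -> R) (delta : R), 0 < delta /\
    (forall t, Rabs (t - t0) < delta -> derivable_pt_lim f t (d t)) /\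
    derivable_pt_lim d t0 c.

Definition Assumption5 (n : nat) (k : nat -> R -> R) (th : (nat -> R) -> R) : Prop :=
  forall sigma, DeltaX n sigma ->
    (0 <= th sigma <= 1 /\
     forall t, 0 <= t <= 1 -> t <> th sigma ->
       KLD n k (th sigma) sigma < KLD n k t sigma) /\
    (0 < th sigma < 1 ->
       exists c, 0 < c /\ twice_diff_at (fun t => KLD n k t sigma) (th sigma) c).

Definition mix (beta : R) (sigma sigmat : nat -> R) : nat -> R :=
  fun x => beta * sigma x + (1 - beta) * sigmat x.

(* Main.v *)
Require Import Defs.
From Stdlib Require Import Reals Lra Lia FunctionalExtensionality Classical.
Open Scope R_scope.

Lemma sumR_lin (m : nat) (f g : nat -> R) (a b : R) :
  sumR m (fun x => a * f x + b * g x) = a * sumR m f + b * sumR m g.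
Proof. induction m; simpl; [ring | rewrite IHm; ring]. Qed.

Lemma sumR_ext (m : nat) (f g : nat -> R) :
  (forall x, (x < m)%nat -> f x = g x) -> sumR m f = sumR m g.
Proof. induction m; simpl; intros H; auto.
  rewrite IHm by (intros; apply H; lia). rewrite H by lia. auto. Qed.

Lemma KLD_comb n k t (r1 r2 : nat -> R) a b :
  KLD n k t (fun x => a * r1 x + b * r2 x) = a * KLD n k t r1 + b * KLD n k t r2.
Proof. unfold KLD. rewrite <- sumR_lin. apply sumR_ext. intros; ring. Qed.

Lemma KLD_mix n k t b s st :
  KLD n k t (mix b s st) = b * KLD n k t s + (1 - b) * KLD n k t st.
Proof. unfold mix. apply KLD_comb. Qed.

Lemma Delta_comb n (r1 r2 : nat -> R) a :
  0 <= a <= 1 -> DeltaX n r1 -> DeltaX n r2 ->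
  DeltaX n (fun x => a * r1 x + (1 - a) * r2 x).
Proof. intros Ha [H1 S1] [H2 S2]. split.
  - intros x Hx. specialize (H1 x Hx); specialize (H2 x Hx). nra.
  - rewrite sumR_lin, S1, S2. ring. Qed.

Lemma Delta_mix n b s st : 0 <= b <= 1 -> DeltaX n s -> DeltaX n st -> DeltaX n (mix b s st).
Proof. intros; unfold mix; apply Delta_comb; auto. Qed.

Lemma th_min n k th (HA5 : Assumption5 n k th) r : DeltaX n r ->
  forall t, 0 <= t <= 1 -> KLD n k (th r) r <= KLD n k t r.
Proof. intros Hr t Ht. destruct (HA5 r Hr) as [[_ H] _].
  destruct (Req_dec t (th r)) as [->|Hne]; [lra|]. left; auto. Qed.

Lemma th_range n k th (HA5 : Assumption5 n k th) r : DeltaX n r -> 0 <= th r <= 1.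
Proof. intros Hr. destruct (HA5 r Hr) as [[H _] _]. auto. Qed.

Lemma th_unique n k th (HA5 : Assumption5 n k th) r t : DeltaX n r -> 0 <= t <= 1 ->
  (forall u, 0 <= u <= 1 -> u <> t -> KLD n k t r < KLD n k u r) -> th r = t.
Proof. intros Hr Ht H. destruct (HA5 r Hr) as [[Hth H2] _].
  destruct (Req_dec (th r) t) as [|Hne]; auto.
  specialize (H _ Hth Hne). specialize (H2 t Ht (not_eq_sym Hne)). lra. Qed.

Lemma LI n k th (HA5 : Assumption5 n k th) r1 r2 a :
  DeltaX n r1 -> DeltaX n r2 -> 0 <= a <= 1 -> th r1 = th r2 ->
  th (fun x => a * r1 x + (1 - a) * r2 x) = th r1.
Proof. intros H1 H2 Ha He. apply (th_unique n k th HA5).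
  - apply Delta_comb; auto.
  - eapply th_range; eauto.
  - intros u Hu Hne. rewrite !KLD_comb.
    destruct (HA5 r1 H1) as [[_ A1] _]. destruct (HA5 r2 H2) as [[_ A2] _].
    specialize (A1 u Hu Hne). rewrite He in Hne. specialize (A2 u Hu Hne). rewrite <- He in A2.
    destruct (Rle_lt_or_eq_dec 0 a (proj1 Ha)) as [Hp|Hz].
    + assert (0 <= 1 - a) by lra. nra.
    + subst a. lra.
Qed.

Lemma cpt_intro f x : (forall eps, 0 < eps -> exists d, 0 < d /\ forall y, Rabs (y - x) < d -> Rabs (f y - f x) < eps) -> continuity_pt f x.
Proof. intros H eps He. destruct (H eps He) as [d [Hd H2]]. exists d; split; auto.
  intros y [_ Hy]. apply H2. exact Hy. Qed.

Lemma cpt_elim f x : continuity_pt f x -> forall eps, 0 < eps -> exists d, 0 < d /\ forall y, Rabs (y - x) < d -> Rabs (f y - f x) < eps.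
Proof. intros H eps He. destruct (H eps He) as [d [Hd H2]]. exists d; split; auto.
  intros y Hy. destruct (Req_dec y x) as [->|Hne].
  - unfold Rminus; rewrite Rplus_opp_r, Rabs_R0; auto.
  - apply (H2 y). split; [split; [exact I| auto] | exact Hy]. Qed.

Definition clamp (t : R) := Rmax 0 (Rmin 1 t).

Lemma clamp_in t : 0 <= clamp t <= 1.
Proof. unfold clamp, Rmax, Rmin. repeat destruct Rle_dec; lra. Qed.
Lemma clamp_id t : 0 <= t <= 1 -> clamp t = t.
Proof. unfold clamp, Rmax, Rmin. repeat destruct Rle_dec; lra. Qed.
Lemma clamp_lip s t : Rabs (clamp s - clamp t) <= Rabs (s - t).
Proof. unfold clamp, Rmax, Rmin. repeat destruct Rle_dec; unfold Rabs; repeat destruct Rcase_abs; lra. Qed.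

Lemma clamp_cont G : cont_on_01 G -> continuity (fun t => G (clamp t)).
Proof. intros H x. apply cpt_intro. intros eps He.
  destruct (H (clamp x) (clamp_in x) eps He) as [d [Hd H2]]. exists d; split; auto.
  intros y Hy. apply H2. apply clamp_in. eapply Rle_lt_trans; [apply clamp_lip|exact Hy]. Qed.

Lemma cont_clamp01 G : continuity (fun t => G (clamp t)) -> cont_on_01 G.
Proof. intros H t Ht eps He. destruct (cpt_elim _ _ (H t) eps He) as [d [Hd H2]].
  exists d; split; auto. intros s Hs Hst. specialize (H2 s Hst). simpl in H2.
  rewrite !clamp_id in H2 by auto. exact H2. Qed.

Lemma continuity_ext f g : continuity f -> (forall x, f x = g x) -> continuity g.
Proof. intros H E. replace g with f; auto. apply functional_extensionality; auto. Qed.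

Lemma sumR_cont m (F : nat -> R -> R) : (forall x, (x < m)%nat -> continuity (F x)) ->
  continuity (fun t => sumR m (fun x => F x t)).
Proof. induction m; intros H; simpl.
  - apply continuity_const. intros ? ?; auto.
  - apply (continuity_ext (plus_fct (fun t => sumR m (fun x => F x t)) (F m))).
    + apply continuity_plus; [apply IHm; intros; apply H; lia| apply H; lia].
    + intros; reflexivity. Qed.

Lemma KLD_cont n k r : (forall x, (x < n)%nat -> cont_on_01 (k x)) ->
  continuity (fun t => KLD n k (clamp t) r).
Proof. intros H. unfold KLD. apply (sumR_cont n (fun x t => r x * k x (clamp t))).
  intros x Hx. apply (continuity_ext (mult_real_fct (r x) (fun t => k x (clamp t)))).
  - apply continuity_scal. apply clamp_cont. auto.
  - intros; reflexivity. Qed.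

Lemma cont_abs F : continuity F -> continuity (fun t => Rabs (F t)).
Proof. intros H. apply (continuity_ext (comp Rabs F)); [apply continuity_comp; auto; apply Rcontinuity_abs | intros; reflexivity]. Qed.

Lemma cont_const c : continuity (fun _ => c).
Proof. apply continuity_const; intros ??; reflexivity. Qed.
Lemma cont_sub F G : continuity F -> continuity G -> continuity (fun t => F t - G t).
Proof. intros; apply (continuity_minus F G); auto. Qed.
Lemma cont_add F G : continuity F -> continuity G -> continuity (fun t => F t + G t).
Proof. intros; apply (continuity_plus F G); auto. Qed.
Lemma cont_half F : continuity F -> continuity (fun t => F t / 2).
Proof. intros H. apply (continuity_ext (mult_real_fct (/2) F)); [apply continuity_scal; auto| intros; unfold mult_real_fct; field]. Qed.
Lemma cont_max F G : continuity F -> continuity G -> continuity (fun t => (F t + G t + Rabs (F t - G t)) / 2).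
Proof. intros HF HG. apply cont_half. apply cont_add; [apply cont_add; auto| apply cont_abs, cont_sub; auto]. Qed.

Lemma max_ge_l a b : a <= (a + b + Rabs (a - b)) / 2.
Proof. unfold Rabs; destruct Rcase_abs; lra. Qed.
Lemma max_ge_r a b : b <= (a + b + Rabs (a - b)) / 2.
Proof. unfold Rabs; destruct Rcase_abs; lra. Qed.
Lemma max_eq_l a b : b <= a -> (a + b + Rabs (a - b)) / 2 = a.
Proof. unfold Rabs; destruct Rcase_abs; lra. Qed.

Lemma f_cont n k th (Hcont : forall x, (x < n)%nat -> cont_on_01 (k x))
  (HA5 : Assumption5 n k th) s st (Hs : DeltaX n s) (Hst : DeltaX n st) :
  cont_on_01 (fun b => th (mix b s st)).
Proof.
  intros b0 Hb0 eps He.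
  set (t0 := th (mix b0 s st)).
  assert (Hm0 : DeltaX n (mix b0 s st)) by (apply Delta_mix; auto).
  assert (Ht0 : 0 <= t0 <= 1) by (eapply th_range; eauto).
  set (D := fun t => KLD n k t s - KLD n k t st).
  assert (HDc : continuity (fun t => - Rabs (D (clamp t)))).
  { apply (continuity_ext (fun t => 0 - Rabs (KLD n k (clamp t) s - KLD n k (clamp t) st))).
    - apply cont_sub; [apply cont_const| apply cont_abs, cont_sub; apply KLD_cont; auto].
    - intros; unfold D; ring. }
  destruct (continuity_ab_min _ 0 1 ltac:(lra) (fun c _ => HDc c)) as [mx [Hmx _]]. cbv beta in Hmx.
  set (M := Rabs (D (clamp mx))).
  assert (HM : forall t, 0 <= t <= 1 -> Rabs (D t) <= M).
  { intros t Ht. specialize (Hmx t Ht). rewrite (clamp_id t) in Hmx by auto. unfold M. lra. }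
  assert (HM0 : 0 <= M) by (apply Rabs_pos).
  set (A := fun t => KLD n k (clamp t) (mix b0 s st) - KLD n k t0 (mix b0 s st)).
  set (B := fun t => eps - Rabs (clamp t - t0)).
  set (psi := fun t => (A t + B t + Rabs (A t - B t)) / 2).
  assert (Hpc : continuity psi).
  { unfold psi. apply cont_max.
    - unfold A. apply cont_sub; [apply KLD_cont; auto| apply cont_const].
    - unfold B. apply cont_sub; [apply cont_const| apply cont_abs, cont_sub; [|apply cont_const]].
      apply (clamp_cont (fun t => t)). intros t _ e He'. exists e; split; auto. }
  destruct (continuity_ab_min _ 0 1 ltac:(lra) (fun c _ => Hpc c)) as [mn [Hmn Hmnr]].
  set (m := psi mn).
  assert (Hmpos : 0 < m).
  { unfold m, psi.
    destruct (Rlt_dec (Rabs (mn - t0)) eps) as [Hl|Hl].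
    - eapply Rlt_le_trans; [|apply max_ge_r]. unfold B. rewrite clamp_id by auto. lra.
    - eapply Rlt_le_trans; [|apply max_ge_l]. unfold A. rewrite clamp_id by auto.
      destruct (HA5 _ Hm0) as [[_ Hu] _]. assert (mn <> t0).
      { intro E. rewrite E in Hl. unfold Rminus in Hl. rewrite Rplus_opp_r, Rabs_R0 in Hl. lra. }
      specialize (Hu mn Hmnr H). fold t0 in Hu. lra. }
  assert (Hfar : forall t, 0 <= t <= 1 -> eps <= Rabs (t - t0) ->
            KLD n k t0 (mix b0 s st) + m <= KLD n k t (mix b0 s st)).
  { intros t Ht Hf. specialize (Hmn t Ht). fold m in Hmn. unfold psi in Hmn.
    rewrite max_eq_l in Hmn.
    - unfold A in Hmn. rewrite clamp_id in Hmn by auto. lra.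
    - unfold A, B. rewrite !clamp_id by auto. pose proof (th_min n k th HA5 _ Hm0 t Ht). fold t0 in H. lra. }
  exists (m / (2 * M + 1)). split; [apply Rdiv_lt_0_compat; lra|].
  intros b Hb Hbb. fold t0.
  set (t := th (mix b s st)).
  assert (Hm : DeltaX n (mix b s st)) by (apply Delta_mix; auto).
  assert (Ht : 0 <= t <= 1) by (eapply th_range; eauto).
  destruct (Rlt_dec (Rabs (t - t0)) eps) as [|Hf]; [auto|exfalso].
  apply Rnot_lt_le in Hf.
  specialize (Hfar t Ht Hf).
  pose proof (th_min n k th HA5 _ Hm t0 Ht0) as Hmin. fold t in Hmin.
  rewrite !KLD_mix in Hmin, Hfar.
  assert (E1 : forall u, b * KLD n k u s + (1 - b) * KLD n k u st =
     (b0 * KLD n k u s + (1 - b0) * KLD n k u st) + (b - b0) * D u) by (intros; unfold D; ring).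
  rewrite !E1 in Hmin.
  assert (Hb1 : (b - b0) * (D t0 - D t) <= Rabs (b - b0) * (2 * M)).
  { eapply Rle_trans; [apply Rle_abs|]. rewrite Rabs_mult. apply Rmult_le_compat_l; [apply Rabs_pos|].
    unfold Rminus at 1. eapply Rle_trans; [apply Rabs_triang|]. rewrite Rabs_Ropp.
    pose proof (HM t0 Ht0); pose proof (HM t Ht); lra. }
  assert (Hb2 : Rabs (b - b0) * (2 * M) <= m / (2 * M + 1) * (2 * M)).
  { apply Rmult_le_compat_r; lra. }
  assert (Hb3 : m / (2 * M + 1) * (2 * M) < m).
  { apply (Rmult_lt_reg_r (2 * M + 1)); [lra|]. field_simplify; [|lra]. nra. }
  lra.
Qed.

Lemma ivt_up F a b v : cont_on_01 F -> 0 <= a -> a < b -> b <= 1 -> F a < v < F b ->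
  exists c, a < c < b /\ F c = v.
Proof. intros HF Ha Hab Hb Hv.
  assert (Hc : continuity (fun t => F (clamp t) - v)).
  { apply cont_sub; [apply clamp_cont; auto| apply cont_const]. }
  destruct (IVT _ a b Hc Hab) as [z [Hz Ez]].
  - rewrite clamp_id by lra. lra.
  - rewrite clamp_id by lra. lra.
  - rewrite clamp_id in Ez by lra. exists z. split; [|lra].
    split; (apply Rnot_le_lt; intro; assert (z = a \/ z = b) as [->| ->] by lra; lra).
Qed.

Lemma ivt_down F a b v : cont_on_01 F -> 0 <= a -> a < b -> b <= 1 -> F b < v < F a ->
  exists c, a < c < b /\ F c = v.
Proof. intros HF Ha Hab Hb Hv.
  assert (Hc : continuity (fun t => v - F (clamp t))).
  { apply cont_sub; [apply cont_const| apply clamp_cont; auto]. }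
  destruct (IVT _ a b Hc Hab) as [z [Hz Ez]].
  - rewrite clamp_id by lra. lra.
  - rewrite clamp_id by lra. lra.
  - rewrite clamp_id in Ez by lra. exists z. split; [|lra].
    split; (apply Rnot_le_lt; intro; assert (z = a \/ z = b) as [->| ->] by lra; lra).
Qed.

Lemma mix_comb a b c s st : a < b ->
  mix c s st = (fun x => ((b - c) / (b - a)) * mix a s st x + (1 - (b - c) / (b - a)) * mix b s st x).
Proof. intros H. apply functional_extensionality. intro x. unfold mix. field. lra. Qed.

Lemma LIf n k th (HA5 : Assumption5 n k th) s st (Hs : DeltaX n s) (Hst : DeltaX n st) a b c :
  0 <= a -> a < c -> c < b -> b <= 1 -> th (mix a s st) = th (mix b s st) ->
  th (mix c s st) = th (mix a s st).
Proof. intros. rewrite (mix_comb a b c) by lra. apply (LI n k th HA5).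
  - apply Delta_mix; auto; lra.
  - apply Delta_mix; auto; lra.
  - assert (0 < / (b - a)) by (apply Rinv_0_lt_compat; lra).
    replace ((b - c) / (b - a)) with (1 - (c - a) / (b - a)) by (field; lra).
    assert (0 <= (c - a) / (b - a)) by (apply Rmult_le_pos; lra).
    assert ((c - a) / (b - a) <= 1) by (apply (Rmult_le_reg_r (b - a)); [lra|]; unfold Rdiv; rewrite Rmult_assoc, Rinv_l by lra; lra).
    lra.
  - auto.
Qed.

Lemma mix0 s st : mix 0 s st = st.
Proof. apply functional_extensionality; intro; unfold mix; ring. Qed.
Lemma mix1 s st : mix 1 s st = s.
Proof. apply functional_extensionality; intro; unfold mix; ring. Qed.

Lemma no_peak n k th (Hcont : forall x, (x < n)%nat -> cont_on_01 (k x))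
  (HA5 : Assumption5 n k th) s st (Hs : DeltaX n s) (Hst : DeltaX n st) a b c :
  0 <= a -> a < b -> b < c -> c <= 1 ->
  let f := fun x => th (mix x s st) in
  ~ (f a < f b /\ f c < f b) /\ ~ (f b < f a /\ f b < f c).
Proof. intros Ha Hab Hbc Hc f. pose proof (f_cont n k th Hcont HA5 s st Hs Hst) as Hf. fold f in Hf.
  split; intros [H1 H2].
  - set (v := (Rmax (f a) (f c) + f b) / 2).
    assert (Hv1 : f a < v < f b) by (unfold v; pose proof (Rmax_l (f a) (f c)); pose proof (Rmax_r (f a) (f c)); unfold Rmax in *; destruct Rle_dec; lra).
    assert (Hv2 : f c < v < f b) by (unfold v; pose proof (Rmax_l (f a) (f c)); pose proof (Rmax_r (f a) (f c)); unfold Rmax in *; destruct Rle_dec; lra).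
    destruct (ivt_up f a b v Hf Ha Hab ltac:(lra) Hv1) as [c1 [Hc1 E1]].
    destruct (ivt_down f b c v Hf ltac:(lra) Hbc Hc Hv2) as [c2 [Hc2 E2]].
    assert (f b = f c1).
    { unfold f. apply (LIf n k th HA5 s st Hs Hst c1 c2 b); try lra. unfold f in E1, E2. congruence. }
    lra.
  - set (v := (Rmin (f a) (f c) + f b) / 2).
    assert (Hv1 : f b < v < f a) by (unfold v; pose proof (Rmin_l (f a) (f c)); pose proof (Rmin_r (f a) (f c)); unfold Rmin in *; destruct Rle_dec; lra).
    assert (Hv2 : f b < v < f c) by (unfold v; pose proof (Rmin_l (f a) (f c)); pose proof (Rmin_r (f a) (f c)); unfold Rmin in *; destruct Rle_dec; lra).
    destruct (ivt_down f a b v Hf Ha Hab ltac:(lra) Hv1) as [c1 [Hc1 E1]].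
    destruct (ivt_up f b c v Hf ltac:(lra) Hbc Hc Hv2) as [c2 [Hc2 E2]].
    assert (f b = f c1).
    { unfold f. apply (LIf n k th HA5 s st Hs Hst c1 c2 b); try lra. unfold f in E1, E2. congruence. }
    lra.
Qed.

Lemma part2 n k th (Hcont : forall x, (x < n)%nat -> cont_on_01 (k x))
  (HA5 : Assumption5 n k th) s st (Hs : DeltaX n s) (Hst : DeltaX n st) :
  th st < th s ->
     forall b1 b2, 0 <= b1 -> b1 <= b2 -> b2 <= 1 ->
       th (mix b1 s st) <= th (mix b2 s st).
Proof. intros Hlt b1 b2 H1 H12 H2.
  destruct (Req_dec b1 b2) as [->|Hne]; [lra|].
  apply Rnot_lt_le; intro Hc.
  set (f := fun x => th (mix x s st)).
  assert (F0 : f 0 = th st) by (unfold f; rewrite mix0; auto).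
  assert (F1 : f 1 = th s) by (unfold f; rewrite mix1; auto).
  change (f b2 < f b1) in Hc.
  destruct (Rle_lt_dec (f b1) (f 1)) as [HA|HB].
  - (* valley at b2 *)
    assert (b2 < 1) by (apply Rnot_le_lt; intro; assert (b2 = 1) by lra; subst b2; lra).
    destruct (no_peak n k th Hcont HA5 s st Hs Hst b1 b2 1 H1 ltac:(lra) H ltac:(lra)) as [_ N].
    apply N. unfold f in *; cbv beta in *; lra.
  - assert (0 < b1) by (apply Rnot_le_lt; intro; assert (b1 = 0) by lra; subst b1; lra).
    destruct (no_peak n k th Hcont HA5 s st Hs Hst 0 b1 1 ltac:(lra) H ltac:(lra) ltac:(lra)) as [N _].
    apply N. unfold f in *; cbv beta in *; lra.
Qed.

Lemma FOC g t l : 0 < t < 1 -> (forall u, 0 <= u <= 1 -> g t <= g u) ->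
  derivable_pt_lim g t l -> l = 0.
Proof. intros Ht Hmin Hd.
  destruct (Req_dec l 0) as [|Hne]; auto. exfalso.
  destruct (Hd (Rabs l) (Rabs_pos_lt _ Hne)) as [[del Hdel] Hh]. simpl in Hh.
  destruct (Rlt_le_dec 0 l) as [Hp|Hn].
  - set (h := - Rmin (del / 2) (t / 2)).
    assert (0 < Rmin (del / 2) (t / 2)) by (apply Rmin_glb_lt; lra).
    pose proof (Rmin_l (del / 2) (t / 2)); pose proof (Rmin_r (del / 2) (t / 2)).
    assert (h < 0) by (unfold h; lra).
    assert (Rabs h < del) by (rewrite Rabs_left by lra; unfold h; lra).
    specialize (Hh h ltac:(lra) H3). rewrite (Rabs_right l) in Hh by lra.
    apply Rabs_def2 in Hh.
    assert (0 <= g (t + h) - g t) by (specialize (Hmin (t + h)); unfold h in *; lra).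
    assert (/ h < 0) by (apply Rinv_lt_0_compat; lra).
    unfold Rdiv in Hh. nra.
  - assert (l < 0) by lra.
    set (h := Rmin (del / 2) ((1 - t) / 2)).
    assert (0 < h) by (apply Rmin_glb_lt; lra).
    pose proof (Rmin_l (del / 2) ((1 - t) / 2)); pose proof (Rmin_r (del / 2) ((1 - t) / 2)).
    assert (Rabs h < del) by (rewrite Rabs_right by lra; unfold h in *; lra).
    specialize (Hh h ltac:(lra) H3). rewrite (Rabs_left l) in Hh by lra.
    apply Rabs_def2 in Hh.
    assert (0 <= g (t + h) - g t) by (specialize (Hmin (t + h)); unfold h in *; lra).
    assert (0 < / h) by (apply Rinv_0_lt_compat; lra).
    unfold Rdiv in Hh. nra.
Qed.

Lemma deriv_bound d x c : derivable_pt_lim d x c -> d x = 0 ->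
  forall eps, 0 < eps -> exists rho, 0 < rho /\ forall u, Rabs (u - x) < rho ->
    Rabs (d u - c * (u - x)) <= eps * Rabs (u - x).
Proof. intros Hd H0 eps He. destruct (Hd eps He) as [[del Hdel] Hh]. simpl in Hh.
  exists del. split; auto. intros u Hu.
  destruct (Req_dec u x) as [->|Hne].
  - rewrite H0. unfold Rminus. rewrite Rplus_opp_r, Rmult_0_r, Ropp_0, Rplus_0_r, Rabs_R0. lra.
  - specialize (Hh (u - x) ltac:(lra) Hu). replace (x + (u - x)) with u in Hh by ring.
    rewrite H0 in Hh.
    replace (d u - c * (u - x)) with ((u - x) * ((d u - 0) / (u - x) - c)) by (field; lra).
    rewrite Rabs_mult. rewrite Rmult_comm. apply Rmult_le_compat_r; [apply Rabs_pos|lra].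
Qed.

Lemma get_data n k th (HA5 : Assumption5 n k th) s st (Hs : DeltaX n s) (Hst : DeltaX n st) bi t :
  0 <= bi <= 1 -> 0 < t < 1 -> th (mix bi s st) = t ->
  exists c d del, 0 < c /\ 0 < del /\
   (forall u, Rabs (u - t) < del -> derivable_pt_lim (fun v => KLD n k v (mix bi s st)) u (d u)) /\
   derivable_pt_lim d t c /\ d t = 0.
Proof. intros Hb Ht E.
  assert (Hm : DeltaX n (mix bi s st)) by (apply Delta_mix; auto).
  destruct (HA5 _ Hm) as [_ H2]. rewrite E in H2.
  destruct (H2 Ht) as [c [Hc [d [del [Hdel [Hder Hd2]]]]]].
  exists c, d, del. repeat split; auto.
  apply (FOC (fun v => KLD n k v (mix bi s st)) t (d t) Ht).
  - intros u Hu. pose proof (th_min n k th HA5 _ Hm u Hu). rewrite E in H. exact H.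
  - apply Hder. unfold Rminus; rewrite Rplus_opp_r, Rabs_R0; auto.
Qed.

Lemma abs_bnd X Y : Rabs X <= Y -> - Y <= X <= Y.
Proof. unfold Rabs; destruct Rcase_abs; lra. Qed.

Lemma abs_from X c e : Rabs (X - c * e) <= Rabs e -> Rabs X <= (Rabs c + 1) * Rabs e.
Proof. intros H. replace X with ((X - c * e) + c * e) by ring.
  eapply Rle_trans; [apply Rabs_triang|]. rewrite Rabs_mult. lra. Qed.

Lemma LC n k th (Hcont : forall x, (x < n)%nat -> cont_on_01 (k x))
  (HA5 : Assumption5 n k th) s st (Hs : DeltaX n s) (Hst : DeltaX n st) b0 b1 b2 t :
  0 <= b0 <= 1 -> 0 <= b1 -> b1 < b2 -> b2 <= 1 -> 0 < t < 1 ->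
  th (mix b0 s st) = t -> th (mix b1 s st) = t -> th (mix b2 s st) = t ->
  exists eta, 0 < eta /\ forall b, 0 <= b <= 1 -> Rabs (b - b0) < eta -> th (mix b s st) = t.
Proof.
  intros Hb0 Hb1 H12 Hb2 Ht E0 E1 E2.
  set (g := fun b u => KLD n k u (mix b s st)).
  destruct (get_data n k th HA5 s st Hs Hst b0 t Hb0 Ht E0) as [c0 [d0 [e0 [Hc0 [He0 [D0 [DD0 Z0]]]]]]].
  destruct (get_data n k th HA5 s st Hs Hst b1 t ltac:(lra) Ht E1) as [c1 [d1 [e1 [Hc1 [He1 [D1 [DD1 Z1]]]]]]].
  destruct (get_data n k th HA5 s st Hs Hst b2 t ltac:(lra) Ht E2) as [c2 [d2 [e2 [Hc2 [He2 [D2 [DD2 Z2]]]]]]].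
  destruct (deriv_bound d0 t c0 DD0 Z0 (c0 / 2) ltac:(lra)) as [r0 [Hr0 B0]].
  destruct (deriv_bound d1 t c1 DD1 Z1 1 ltac:(lra)) as [r1 [Hr1 B1]].
  destruct (deriv_bound d2 t c2 DD2 Z2 1 ltac:(lra)) as [r2 [Hr2 B2]].
  set (rho := Rmin (Rmin e0 (Rmin e1 e2)) (Rmin r0 (Rmin r1 r2))).
  assert (Hrho : 0 < rho) by (unfold rho; repeat apply Rmin_glb_lt; auto).
  assert (Hrle : rho <= e0 /\ rho <= e1 /\ rho <= e2 /\ rho <= r0 /\ rho <= r1 /\ rho <= r2).
  { unfold rho. pose proof (Rmin_l (Rmin e0 (Rmin e1 e2)) (Rmin r0 (Rmin r1 r2))).
    pose proof (Rmin_r (Rmin e0 (Rmin e1 e2)) (Rmin r0 (Rmin r1 r2))).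
    pose proof (Rmin_l e0 (Rmin e1 e2)); pose proof (Rmin_r e0 (Rmin e1 e2)).
    pose proof (Rmin_l e1 e2); pose proof (Rmin_r e1 e2).
    pose proof (Rmin_l r0 (Rmin r1 r2)); pose proof (Rmin_r r0 (Rmin r1 r2)).
    pose proof (Rmin_l r1 r2); pose proof (Rmin_r r1 r2). lra. }
  set (L := Rabs c1 + Rabs c2 + 2).
  assert (HL : 0 < L) by (unfold L; pose proof (Rabs_pos c1); pose proof (Rabs_pos c2); lra).
  destruct (f_cont n k th Hcont HA5 s st Hs Hst b0 Hb0 rho Hrho) as [eta2 [Heta2 Hf]].
  set (eta1 := c0 * (b2 - b1) / (4 * L)).
  assert (Heta1 : 0 < eta1) by (unfold eta1; apply Rdiv_lt_0_compat; [apply Rmult_lt_0_compat|]; lra).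
  exists (Rmin eta1 eta2). split; [apply Rmin_glb_lt; auto|].
  intros b Hb Hbb.
  pose proof (Rmin_l eta1 eta2); pose proof (Rmin_r eta1 eta2).
  set (r := (b - b0) / (b2 - b1)).
  assert (Hr : Rabs r * L <= c0 / 4).
  { unfold r, Rdiv. rewrite Rabs_mult, (Rabs_right (/ (b2 - b1))) by (left; apply Rinv_0_lt_compat; lra).
    assert (Rabs (b - b0) <= c0 * (b2 - b1) / (4 * L)) by (fold eta1; lra).
    apply (Rmult_le_reg_r (b2 - b1)); [lra|].
    replace (Rabs (b - b0) * / (b2 - b1) * L * (b2 - b1)) with (Rabs (b - b0) * L) by (field; lra).
    apply (Rmult_le_reg_r (/ L)); [apply Rinv_0_lt_compat; lra|].
    replace (Rabs (b - b0) * L * / L) with (Rabs (b - b0)) by (field; lra).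
    eapply Rle_trans; [exact H1|]. right. field. lra. }
  pose proof (Hf b Hb ltac:(lra)) as Htb. rewrite E0 in Htb. simpl in Htb.
  set (tb := th (mix b s st)) in *.
  assert (Eg : g b = fun u => g b0 u + r * (g b2 u - g b1 u)).
  { apply functional_extensionality; intro u. unfold g, r. rewrite !KLD_mix. field. lra. }
  set (G' := fun u => d0 u + r * (d2 u - d1 u)).
  assert (Hder : forall u, Rabs (u - t) < rho -> derivable_pt_lim (g b) u (G' u)).
  { intros u Hu. rewrite Eg. unfold G'.
    apply (derivable_pt_lim_plus (g b0) (mult_real_fct r (minus_fct (g b2) (g b1)))).
    - apply D0; lra.
    - apply derivable_pt_lim_scal. apply derivable_pt_lim_minus; [apply D2|apply D1]; lra. }
  assert (Hpos : forall u, 0 < Rabs (u - t) < rho -> G' u * (u - t) > 0).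
  { intros u [Hu0 Hu]. unfold G'.
    specialize (B0 u ltac:(lra)). specialize (B1 u ltac:(lra)). specialize (B2 u ltac:(lra)).
    rewrite Rmult_1_l in B1, B2. apply abs_from in B1. apply abs_from in B2. apply abs_bnd in B0.
    set (e := u - t) in *.
    assert (Q : Rabs (r * (d2 u - d1 u)) <= c0 / 4 * Rabs e).
    { rewrite Rabs_mult.
      assert (HX : Rabs (d2 u - d1 u) <= L * Rabs e).
      { unfold Rminus. eapply Rle_trans; [apply Rabs_triang|]. rewrite Rabs_Ropp. unfold L. lra. }
      eapply Rle_trans; [apply Rmult_le_compat_l; [apply Rabs_pos| exact HX]|].
      rewrite <- Rmult_assoc. apply Rmult_le_compat_r; [apply Rabs_pos| exact Hr]. }
    apply abs_bnd in Q.
    destruct (Rlt_le_dec 0 e) as [Hep|Hen].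
    - rewrite (Rabs_right e) in * by lra.
      assert (HS : d0 u + r * (d2 u - d1 u) >= c0 / 4 * e) by lra. clear -HS Hep Hc0. assert (HX2 : d0 u + r * (d2 u - d1 u) > 0) by nra. nra.
    - assert (Hneg : e < 0).
      { destruct (Req_dec e 0) as [Ez|]; [rewrite Ez, Rabs_R0 in Hu0; lra | lra]. }
      rewrite (Rabs_left e) in * by lra.
      assert (HS : d0 u + r * (d2 u - d1 u) <= c0 / 4 * e) by lra. clear -HS Hneg Hc0. assert (HX2 : d0 u + r * (d2 u - d1 u) < 0) by nra. nra. }
  assert (Hmb : DeltaX n (mix b s st)) by (apply Delta_mix; auto).
  pose proof (th_min n k th HA5 _ Hmb t ltac:(lra)) as Hmin. fold tb in Hmin.
  change (g b tb <= g b t) in Hmin.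
  destruct (Req_dec tb t) as [|Hne]; auto. exfalso.
  destruct (Rlt_le_dec t tb) as [Hlt|Hle].
  - destruct (MVT_cor2 (g b) G' t tb Hlt) as [xi [Exi Hxi]].
    + intros c Hc. apply Hder. rewrite Rabs_right by lra. rewrite Rabs_right in Htb by lra. lra.
    + assert (G' xi * (xi - t) > 0) by (apply Hpos; rewrite Rabs_right by lra; rewrite Rabs_right in Htb by lra; lra).
      assert (G' xi > 0) by (destruct (Rlt_le_dec 0 (G' xi)); [lra| nra]).
      nra.
  - assert (Htl : tb < t) by lra.
    destruct (MVT_cor2 (g b) G' tb t Htl) as [xi [Exi Hxi]].
    + intros c Hc. apply Hder. rewrite Rabs_left1 by lra. rewrite Rabs_left in Htb by lra. lra.
    + assert (G' xi * (xi - t) > 0) by (apply Hpos; rewrite Rabs_left by lra; rewrite Rabs_left in Htb by lra; lra).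
      assert (G' xi < 0) by (destruct (Rlt_le_dec (G' xi) 0); [lra| nra]).
      nra.
Qed.

Definition OpenP (P : R -> Prop) := forall b, 0 <= b <= 1 -> P b ->
  exists eta, 0 < eta /\ forall b', 0 <= b' <= 1 -> Rabs (b' - b) < eta -> P b'.

Lemma up01 (P : R -> Prop) b1 : 0 <= b1 <= 1 -> P b1 -> OpenP P -> OpenP (fun b => ~ P b) -> P 1.
Proof.
  intros Hb1 HP Ho Hc.
  set (E := fun b => b1 <= b <= 1 /\ forall b', b1 <= b' <= b -> P b').
  assert (HE1 : E b1) by (split; [lra| intros b' Hb'; replace b' with b1 by lra; auto]).
  assert (Hbd : bound E) by (exists 1; intros x [Hx _]; lra).
  destruct (completeness E Hbd (ex_intro _ b1 HE1)) as [s [Hub Hlub]].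
  assert (Hs1 : b1 <= s) by (apply Hub; auto).
  assert (Hs2 : s <= 1) by (apply Hlub; intros x [Hx _]; lra).
  assert (Hall : forall b', b1 <= b' < s -> P b').
  { intros b' Hb'. destruct (classic (exists b, E b /\ b' < b)) as [[b [[_ Hb] Hlt]]|Hn].
    - apply Hb; lra.
    - exfalso. assert (s <= b'); [|lra]. apply Hlub. intros x Hx.
      apply Rnot_lt_le. intro. apply Hn. exists x; auto. }
  assert (HPs : P s).
  { destruct (classic (P s)) as [|HnP]; auto. exfalso.
    destruct (Req_dec s b1) as [->|Hne]; [auto|].
    destruct (Hc s ltac:(lra) HnP) as [eta [Heta Hn]].
    set (b' := Rmax b1 (s - eta / 2)).
    assert (b1 <= b' < s) by (unfold b', Rmax; destruct Rle_dec; lra).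
    apply (Hn b'); [lra| |apply Hall; auto].
    unfold b', Rmax; destruct Rle_dec; rewrite Rabs_left by lra; lra. }
  destruct (Req_dec s 1) as [<-|Hne]; auto. exfalso.
  destruct (Ho s ltac:(lra) HPs) as [eta [Heta Hn]].
  set (s' := Rmin 1 (s + eta / 2)).
  assert (s < s' <= 1 /\ s' <= s + eta / 2) by (unfold s', Rmin; destruct Rle_dec; lra).
  assert (E s').
  { split; [lra|]. intros b' Hb'.
    destruct (Rlt_le_dec b' s); [apply Hall; lra|].
    destruct (Req_dec b' s) as [->|]; auto.
    apply Hn; [lra|]. rewrite Rabs_right by lra. lra. }
  specialize (Hub s' H0). lra.
Qed.

Lemma down01 (P : R -> Prop) b1 : 0 <= b1 <= 1 -> P b1 -> OpenP P -> OpenP (fun b => ~ P b) -> P 0.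
Proof.
  intros Hb1 HP Ho Hc.
  replace 0 with (1 - 1) by ring.
  apply (up01 (fun b => P (1 - b)) (1 - b1)); [lra| cbv beta; replace (1 - (1 - b1)) with b1 by ring; auto | |].
  - intros b Hb Pb. destruct (Ho (1 - b) ltac:(lra) Pb) as [eta [He Hn]]. exists eta; split; auto.
    intros b' Hb' Hd. apply Hn; [lra|]. replace (1 - b' - (1 - b)) with (- (b' - b)) by ring. rewrite Rabs_Ropp; auto.
  - intros b Hb Pb. destruct (Hc (1 - b) ltac:(lra) Pb) as [eta [He Hn]]. exists eta; split; auto.
    intros b' Hb' Hd. apply Hn; [lra|]. replace (1 - b' - (1 - b)) with (- (b' - b)) by ring. rewrite Rabs_Ropp; auto.
Qed.

Theorem proposition5 (n : nat) (k : nat -> R -> R) (th : (nat -> R) -> R)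
  (Hcont : forall x, (x < n)%nat -> cont_on_01 (k x))
  (HA5 : Assumption5 n k th)
  (sigma sigmat : nat -> R) (Hs : DeltaX n sigma) (Hst : DeltaX n sigmat) :
  (th sigma = th sigmat ->
     forall beta, 0 <= beta <= 1 -> th (mix beta sigma sigmat) = th sigma) /\
  (th sigmat < th sigma ->
     forall b1 b2, 0 <= b1 -> b1 <= b2 -> b2 <= 1 ->
       th (mix b1 sigma sigmat) <= th (mix b2 sigma sigmat)) /\
  (th sigmat < th sigma ->
     forall b1 b2, 0 <= b1 -> b1 < b2 -> b2 <= 1 ->
       0 < th (mix b1 sigma sigmat) < 1 ->
       th (mix b1 sigma sigmat) < th (mix b2 sigma sigmat)).
Proof.
  split; [|split].
  - intros E beta Hb. unfold mix. apply (LI n k th HA5); auto.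
  - apply (part2 n k th Hcont HA5 sigma sigmat Hs Hst).
  - intros Hlt b1 b2 H1 H12 H2 Hin.
    pose proof (part2 n k th Hcont HA5 sigma sigmat Hs Hst Hlt b1 b2 H1 ltac:(lra) H2) as Hle.
    destruct Hle as [|Heq]; auto. exfalso.
    set (t := th (mix b1 sigma sigmat)) in *.
    set (P := fun b => th (mix b sigma sigmat) = t).
    assert (Ho : OpenP P).
    { intros b Hb Pb. apply (LC n k th Hcont HA5 sigma sigmat Hs Hst b b1 b2 t); auto. }
    assert (Hc : OpenP (fun b => ~ P b)).
    { intros b Hb Pb. unfold P in Pb.
      set (eps := Rabs (th (mix b sigma sigmat) - t)).
      assert (He : 0 < eps) by (apply Rabs_pos_lt; intro; apply Pb; lra).
      destruct (f_cont n k th Hcont HA5 sigma sigmat Hs Hst b Hb eps He) as [eta [Heta Hf]].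
      exists eta; split; auto. intros b' Hb' Hd E. specialize (Hf b' Hb' Hd). unfold P in E. simpl in Hf.
      rewrite E in Hf. unfold eps in Hf. rewrite <- Rabs_Ropp in Hf.
      replace (- (t - th (mix b sigma sigmat))) with (th (mix b sigma sigmat) - t) in Hf by ring. lra. }
    assert (HP1 : P 1) by (apply (up01 P b1); auto; [lra|reflexivity]).
    assert (HP0 : P 0) by (apply (down01 P b1); auto; [lra|reflexivity]).
    unfold P in HP0, HP1. rewrite mix0 in HP0. rewrite mix1 in HP1. lra.
Qed.
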